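(* Let $G$ be an edge-colored graph. Then $G$ contains a spanning bipartite subgraph $H$ such that $2d_{H}^{c}(v)+3d_{H}(v)\geq d_G^{c}(v)+d_G(v)$ for every vertex $v\in V(H)$.
   Context: An edge-colored graph is a finite simple graph $G$ with a map $C:E(G)\to\mathbb{N}$; subgraphs inherit the coloring. For a subgraph $H$ and $v\in V(H)$, $d_H(v)$ is the degree of $v$ in $H$ and $d_H^c(v)$ is the number of distinct colors on edges of $H$ incident to $v$. *)

(* Defs.v *)
From mathcomp Require Import all_boot.
Set Implicit Arguments. Unset Strict Implicit. Unset Printing Implicit Defensive.

(* A finite simple graph on vertex type T is given by its edge set
   E : {set {set T}}, each edge being a 2-element subset of T.
   Subgraphs on the same vertex set (spanning subgraphs) are given by
   subsets F of E.  An edge coloring is a map C : {set T} -> nat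
   (only its values on edges matter); subgraphs inherit it. *)

Definition simple_graph (T : finType) (E : {set {set T}}) : Prop :=
  forall e, e \in E -> #|e| = 2.

Definition inc_edges (T : finType) (F : {set {set T}}) (v : T) : {set {set T}} :=
  [set e in F | v \in e].

Definition deg (T : finType) (F : {set {set T}}) (v : T) : nat :=
  #|inc_edges F v|.

Definition cdeg (T : finType) (C : {set T} -> nat) (F : {set {set T}}) (v : T) : nat :=
  size (undup [seq C e | e <- enum (inc_edges F v)]).

Definition bipartite (T : finType) (F : {set {set T}}) : Prop :=
  exists A : {set T}, forall e, e \in F -> #|e :&: A| = 1 /\ #|e :\: A| = 1.

(* Main.v *)
Require Import Defs.
From mathcomp Require Import all_boot.
From mathcomp Require Import zify.
Set Implicit Arguments. Unset Strict Implicit.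

Lemma card2I (T : finType) (x y : T) (A : {set T}) : x != y ->
  (#|[set x; y] :&: A| == 1) = (x \in A) (+) (y \in A).
Proof.
move=> xy; have yx : y != x by rewrite eq_sym.
have H : forall z, (z \in [set x; y] :&: A) = ((z == x) && (x \in A)) || ((z == y) && (y \in A)).
  move=> z; rewrite !inE; have [->|zx] := eqVneq z x; [|have [->|zy] := eqVneq z y];
  rewrite ?eqxx ?(negbTE xy) ?(negbTE yx) /= ?andbT ?andbF ?orbF //.
case xA: (x \in A); case yA: (y \in A) => /=.
- have -> : [set x; y] :&: A = [set x; y].
    by apply/setP=> z; rewrite H xA yA !inE !andbT.
  by rewrite cards2 xy.
- have -> : [set x; y] :&: A = [set x].
    by apply/setP=> z; rewrite H xA yA !inE !andbT andbF orbF.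
  by rewrite cards1.
- have -> : [set x; y] :&: A = [set y].
    by apply/setP=> z; rewrite H xA yA !inE !andbT andbF.
  by rewrite cards1.
- have -> : [set x; y] :&: A = set0.
    by apply/setP=> z; rewrite H xA yA !inE !andbF.
  by rewrite cards0.
Qed.

Section Lem.
Variables (T : finType) (E : {set {set T}}) (C : {set T} -> nat).
Hypothesis sE : simple_graph E.

Definition cut (A : {set T}) := locked [set e in E | #|e :&: A| == 1].
Lemma mem_cut A e : (e \in cut A) = (e \in E) && (#|e :&: A| == 1).
Proof. by rewrite /cut -lock inE. Qed.
Definition tog (v : T) (A : {set T}) := if v \in A then A :\ v else v |: A.
Definition ncol (S : {set {set T}}) := size (undup [seq C e | e <- enum S]).
Definition Phi (A : {set T}) := \sum_u cdeg C (cut A) u + #|cut A|.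

Lemma in_tog w v A : (w \in tog v A) = (w \in A) (+) (w == v).
Proof.
rewrite /tog; case vA: (v \in A); rewrite !inE; have [->|wv] := eqVneq w v;
  rewrite ?vA //= ?addbF ?addbT //.
Qed.

Lemma cutE A e : e \in cut A -> e \in E.
Proof. by rewrite mem_cut => /andP[]. Qed.

Lemma cut_tog v A e : e \in E -> (e \in cut (tog v A)) = (e \in cut A) (+) (v \in e).
Proof.
move=> eE; have /cards2P [x [y [xy ee]]] : #|e| == 2 by rewrite sE.
rewrite !mem_cut eE /= ee !card2I // !in_tog !inE.
have [exv|xv] := eqVneq x v; have [eyv|yv] := eqVneq y v; rewrite ?exv ?eyv ?eqxx //=.
- by move: xy; rewrite exv eyv eqxx.
all: rewrite ?(eq_sym v y) ?(eq_sym v x) ?(negbTE xv) ?(negbTE yv) /=.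
all: by case: (x \in A); case: (y \in A); case: (v \in A).
Qed.

Lemma ncol_sub (S S1 S2 : {set {set T}}) : S \subset S1 :|: S2 -> ncol S <= ncol S1 + ncol S2.
Proof.
move=> sub; rewrite /ncol -size_cat; apply: uniq_leq_size; first exact: undup_uniq.
move=> c; rewrite mem_undup mem_cat !mem_undup => /mapP [e]; rewrite mem_enum => eS ->.
move/subsetP: sub => /(_ e eS); rewrite inE => /orP [h|h]; apply/orP; [left|right];
  by apply/map_f; rewrite mem_enum.
Qed.

Lemma ncol_card (S : {set {set T}}) : ncol S <= #|S|.
Proof.
by rewrite /ncol cardE; apply: leq_trans (size_undup _) _; rewrite size_map.
Qed.

Lemma sum_inc (X : {set {set T}}) : (forall e, e \in X -> #|e| = 2) ->
  \sum_u #|inc_edges X u| = 2 * #|X|.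
Proof.
move=> X2.
rewrite (eq_bigr (fun u => \sum_(e in X) (u \in e) : nat)); last first.
  move=> u _; rewrite -sum1_card [RHS]big_mkcond [LHS]big_mkcond /=.
  by apply: eq_bigr => e _; rewrite !inE; case: (e \in X); case: (u \in e).
rewrite exchange_big /= (eq_bigr (fun _ => 2)); last first.
  move=> e eX; rewrite -(X2 e eX) -sum1_card [RHS]big_mkcond /=.
  by apply: eq_bigr.
by rewrite sum_nat_const mulnC.
Qed.

Lemma local A v :
  Phi A + cdeg C E v + deg E v <=
  Phi (tog v A) + 2 * cdeg C (cut A) v + 3 * deg (cut A) v.
Proof.
set H := cut A; set H' := cut (tog v A).
set B := [set e : {set T} | v \in e].
have degB : forall F : {set {set T}}, deg F v = #|F :&: B|.
  by move=> F; rewrite /deg; apply: eq_card => e; rewrite !inE.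
have HH' : #|H'| + 2 * deg H v = #|H| + deg E v.
  rewrite !degB -(cardsID B H) -(cardsID B H') -(cardsID H (E :&: B)).
  have -> : H' :\: B = H :\: B.
    apply/setP => e; rewrite !inE; case eE: (e \in E).
      by rewrite /H' (cut_tog _ _ eE); case: (v \in e); rewrite ?addbF.
    by rewrite /H /H' !mem_cut eE.
  have -> : (E :&: B) :&: H = H :&: B.
    apply/setP => e; rewrite !inE; case eH: (e \in H); rewrite ?andbF //=.
    by rewrite (cutE eH) andbT.
  have -> : (E :&: B) :\: H = H' :&: B.
    apply/setP => e; rewrite !inE; case eE: (e \in E); rewrite ?andbF //=.
      by rewrite /H' (cut_tog _ _ eE); case: (v \in e); case: (e \in H).
    by rewrite /H' !mem_cut eE.
  set a := #|H :&: B|; set b := #|H' :&: B|; set c := #|H :\: B|. lia.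
have cu : forall u, cdeg C H u <= cdeg C H' u + #|inc_edges (inc_edges H v) u|.
  move=> u; change (ncol (inc_edges H u) <= ncol (inc_edges H' u) + #|inc_edges (inc_edges H v) u|).
  apply: leq_trans (leq_add (leqnn _) (ncol_card _)).
  apply: ncol_sub.
  apply/subsetP => e; rewrite !inE => /andP [eH ue]; case ve: (v \in e).
    by rewrite eH ue orbT.
  by rewrite /H' (cut_tog _ _ (cutE eH)) -/H eH ve ue.
have cv : cdeg C E v <= cdeg C H v + cdeg C H' v.
  change (ncol (inc_edges E v) <= ncol (inc_edges H v) + ncol (inc_edges H' v)).
  apply: ncol_sub.
  apply/subsetP => e; rewrite !inE => /andP [eE ve].
  by rewrite /H' (cut_tog _ _ eE) ve; case: (e \in H).
have sm := sum_inc (X := inc_edges H v).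
have mv : #|inc_edges (inc_edges H v) v| = deg H v.
  rewrite /deg; apply: eq_card => e; by rewrite !inE -andbA andbb.
have s1 : \sum_u cdeg C H u = cdeg C H v + \sum_(u | u != v) cdeg C H u.
  by rewrite (bigD1 v).
have s2 : \sum_u cdeg C H' u = cdeg C H' v + \sum_(u | u != v) cdeg C H' u.
  by rewrite (bigD1 v).
have s3 : \sum_u #|inc_edges (inc_edges H v) u| = #|inc_edges (inc_edges H v) v|
      + \sum_(u | u != v) #|inc_edges (inc_edges H v) u|.
  by rewrite (bigD1 v).
have s4 : \sum_u #|inc_edges (inc_edges H v) u| = 2 * #|inc_edges H v|.
  apply: sm => e; rewrite inE => /andP [eH _]; exact: sE (cutE eH).
have le : \sum_(u | u != v) cdeg C H u <=
          \sum_(u | u != v) cdeg C H' u + \sum_(u | u != v) #|inc_edges (inc_edges H v) u|.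
  by rewrite -big_split /=; apply: leq_sum => u _; apply: cu.
rewrite /Phi -/H -/H' s1 s2.
move: le s3 s4 HH' mv cv; rewrite /deg.
set a1 := \sum_(u | u != v) cdeg C H u.
set a2 := \sum_(u | u != v) cdeg C H' u.
set a3 := \sum_(u | u != v) #|inc_edges (inc_edges H v) u|.
set a4 := \sum_u #|inc_edges (inc_edges H v) u|.
lia.
Qed.

End Lem.

Theorem lemma7 (T : finType) (E : {set {set T}}) (C : {set T} -> nat) :
  simple_graph E ->
  exists F : {set {set T}},
    [/\ F \subset E, bipartite F &
        forall v : T, 2 * cdeg C F v + 3 * deg F v >= cdeg C E v + deg E v].
Proof.
move=> sE.
case: (@arg_maxnP _ set0 predT (Phi E C) isT) => A _ Amax.
exists (cut E A); split.
- by apply/subsetP => e /cutE.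
- exists A => e; rewrite mem_cut => /andP [eE /eqP h]; split => //.
  by have := cardsID A e; rewrite h (sE _ eE); lia.
- move=> v; have := local C sE A v; have := Amax (tog v A) isT.
  lia.
Qed.
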